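(* Under the standing assumptions (A1)–(A2) below, for every $\varepsilon>0$ there exist $R_2^{\varepsilon}>0$ and $c_7^{\varepsilon}>0$ such that for all $\mathbf{x}\in\mathbb{R}^n$ with $|\mathbf{x}|>R_2^{\varepsilon}$ one has $\mathbf{F}^{\varepsilon}(\mathbf{x})\neq0$ and \[ \Big\langle \mathbf{F}^{\varepsilon}(\mathbf{x}),\tfrac{\mathbf{x}}{|\mathbf{x}|}\Big\rangle<-c_7^{\varepsilon}\,|\mathbf{F}^{\varepsilon}(\mathbf{x})|. \]
   Context: Write points of $\mathbb{R}^n$ as $\mathbf{x}=(x,\mathbf{y})$ with $x\in\mathbb{R}$, $\mathbf{y}\in\mathbb{R}^{n-1}$; $|\cdot|$ is the Euclidean norm and $\langle\cdot,\cdot\rangle$ the Euclidean inner product. Let $\mathbf{F}^{\pm}:\mathbb{R}^n\to\mathbb{R}^n$ be smooth vector fields and define the piecewise-smooth field $\mathbf{F}(\mathbf{x})=\mathbf{F}^+(\mathbf{x})$ if $x>0$, $\mathbf{F}(\mathbf{x})=\mathbf{F}^-(\mathbf{x})$ if $x<0$. Standing assumptions: (A1) (growth) There exist $1<p<\infty$, $R_1,c_1,c_3,c_5>0$ and $c_2,c_4,c_6\in\mathbb{R}$ with $c_5<c_1$ such that for $|\mathbf{x}|>R_1$: $|\mathbf{F}^-(\mathbf{x})|\ge c_1|\mathbf{x}|^p+c_2$ if $x<0$ and $|\mathbf{F}^+(\mathbf{x})|\ge c_1|\mathbf{x}|^p+c_2$ if $x>0$; $|\partial_x\mathbf{F}^-(\mathbf{x})|\le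 c_3|\mathbf{x}|^p+c_4$ if $x<0$ and $|\partial_x\mathbf{F}^+(\mathbf{x})|\le c_3|\mathbf{x}|^p+c_4$ if $x>0$; and $|\mathbf{F}^+(0,\mathbf{y})-\mathbf{F}^-(0,\mathbf{y})|\le c_5|\mathbf{y}|^p+c_6$. (A2) (asymptotically inward-flowing) There exist $R_2,c_7>0$ such that $|\mathbf{x}|>R_2$ implies $\mathbf{F}^{\pm}(\mathbf{x})\neq0$ and $\langle\mathbf{F}^-(\mathbf{x}),\mathbf{x}/|\mathbf{x}|\rangle<-c_7|\mathbf{F}^-(\mathbf{x})|$ if $x\le0$, $\langle\mathbf{F}^+(\mathbf{x}),\mathbf{x}/|\mathbf{x}|\rangle<-c_7|\mathbf{F}^+(\mathbf{x})|$ if $x\ge0$. Mollification: let $\zeta:\mathbb{R}\to\mathbb{R}$ be a smooth, even, nonnegative function supported in $[-1,1]$ with $\int_{\mathbb{R}}\zeta=1$ (e.g. $\zeta(x)=C\exp(1/(x^2-1))$ for $|x|<1$, $0$ otherwise). For $\varepsilon>0$ set $\zeta_\varepsilon(x)=\zeta(x/\varepsilon)/\varepsilon$, and define the mollified field \[ \mathbf{F}^{\varepsilon}(x,\mathbf{y})=\int_{-\varepsilon}^{\varepsilon}\zeta_\varepsilon(u)\Big(\mathbf{F}^-(x-u,\mathbf{y})\mathbb{1}_{\{u\ge x\}}+\mathbf{F}^+(x-u,\mathbf{y})\mathbb{1}_{\{u\le x\}}\Big)\,du . \] *)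

(* Defs.v *)
(* R : realType, points of R^n as 'rV[R]_m.+1 (n = m+1). *)
From HB Require Import structures.
From mathcomp Require Import all_boot all_order all_algebra.
From mathcomp Require Import all_classical all_reals all_analysis.
Set Implicit Arguments. Unset Strict Implicit. Unset Printing Implicit Defensive.
Import Order.TTheory GRing.Theory Num.Theory.
Import numFieldNormedType.Exports.
Local Open Scope classical_set_scope.
Local Open Scope ring_scope.

Section Defs.
Variable R : realType.

Definition edot (n : nat) (u v : 'rV[R]_n) : R := \sum_(i < n) u 0 i * v 0 i.
Definition enorm (n : nat) (u : 'rV[R]_n) : R := Num.sqrt (edot u u).

Definition e1 (m : nat) : 'rV[R]_m.+1 := delta_mx 0 0.

Fixpoint dirder (V W : normedModType R) (vs : seq V) (f : V -> W) : V -> W :=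
  match vs with
  | [::] => f
  | v :: vs' => fun x => 'D_v (dirder vs' f) x
  end.

Definition smooth (V W : normedModType R) (f : V -> W) : Prop :=
  forall vs : seq V, continuous (dirder vs f) /\
    (forall (v x : V), derivable (dirder vs f) x v).

Definition zeta_eps (zeta : R -> R) (eps : R) (u : R) : R := zeta (u / eps) / eps.

(* the mollified field F^eps, componentwise Lebesgue integral over [-eps, eps];
   (x - u, y) is the point p - u e_1 *)
Definition Feps (m : nat) (zeta : R -> R) (Fm Fp : 'rV[R]_m.+1 -> 'rV[R]_m.+1)
    (eps : R) (p : 'rV[R]_m.+1) : 'rV[R]_m.+1 :=
  \row_(i < m.+1) Rintegral lebesgue_measure `[- eps, eps]
     (fun u : R => zeta_eps zeta eps u *
        (Fm (p - u *: e1 m) 0 i * (if p 0 0 <= u then 1 else 0) +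
         Fp (p - u *: e1 m) 0 i * (if u <= p 0 0 then 1 else 0))).
End Defs.
Arguments e1 {R} m.

(* Main.v *)
Require Import Defs.
From HB Require Import structures.
From mathcomp Require Import all_boot all_order all_algebra.
From mathcomp Require Import all_classical all_reals all_analysis.
From mathcomp Require Import ring lra.
Import Order.TTheory GRing.Theory Num.Theory.
Import numFieldNormedType.Exports.
Local Open Scope classical_set_scope.
Local Open Scope ring_scope.
Section Alg.
Context {R : realType}.
Context {m : nat}.
Implicit Types (u v w : 'rV[R]_m.+1).

Lemma edotC u v : edot u v = edot v u.
Proof. by apply: eq_bigr => i _; rewrite mulrC. Qed.

Lemma edotDr u v w : edot u (v + w) = edot u v + edot u w.
Proof. by rewrite /edot -big_split; apply: eq_bigr => i _; rewrite mxE mulrDr. Qed.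

Lemma edotZr u v (a : R) : edot u (a *: v) = a * edot u v.
Proof. by rewrite /edot mulr_sumr; apply: eq_bigr => i _; rewrite mxE mulrCA. Qed.

Lemma edotNr u v : edot u (- v) = - edot u v.
Proof. by rewrite -scaleN1r edotZr mulN1r. Qed.

Lemma edotBr u v w : edot u (v - w) = edot u v - edot u w.
Proof. by rewrite edotDr edotNr. Qed.

Lemma edot_e1 u : edot u (e1 m) = u 0 0.
Proof.
rewrite /edot (bigD1 ord0)//= big1 => [|j jne].
  by rewrite !mxE /= mulr1 addr0.
by rewrite !mxE (negPf jne) andbF mulr0.
Qed.

Lemma edot_ge0 u : 0 <= edot u u.
Proof. by apply: sumr_ge0 => i _; rewrite -expr2 sqr_ge0. Qed.

Lemma enorm_ge0 u : 0 <= enorm u.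
Proof. exact: sqrtr_ge0. Qed.

Lemma enorm_sq u : enorm u ^+ 2 = edot u u.
Proof. by rewrite sqr_sqrtr// edot_ge0. Qed.

Lemma le_sqrt_of (a b : R) : 0 <= b -> a ^+ 2 <= b -> `|a| <= Num.sqrt b.
Proof. by move=> b0 h; rewrite -sqrtr_sqr ler_sqrt. Qed.

Lemma le_sqrt_to (a b : R) : b <= a ^+ 2 -> Num.sqrt b <= `|a|.
Proof. by move=> h; rewrite -sqrtr_sqr ler_sqrt// sqr_ge0. Qed.

Lemma coord_le u i : `|u 0 i| <= enorm u.
Proof.
apply: le_sqrt_of; first exact: edot_ge0.
rewrite /edot (bigD1 i)//= expr2 lerDl; apply: sumr_ge0 => j _.
by rewrite -expr2 sqr_ge0.
Qed.

Lemma sum_le_n u : \sum_(i < m.+1) `|u 0 i| <= m.+1%:R * enorm u.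
Proof.
apply: (le_trans (ler_sum _ (fun i _ => coord_le u i))).
by rewrite sumr_const card_ord mulr_natl.
Qed.

Lemma enorm_le_sum u : enorm u <= \sum_(i < m.+1) `|u 0 i|.
Proof.
have s0 : 0 <= \sum_(i < m.+1) `|u 0 i| by apply: sumr_ge0 => i _.
rewrite -(ger0_norm s0); apply: le_sqrt_to.
rewrite /edot expr2 mulr_suml; apply: ler_sum => i _.
rewrite -[u 0 i * u 0 i]expr2 -real_normK ?num_real// expr2.
apply: ler_wpM2l => //.
by rewrite (bigD1 i)//= lerDl; apply: sumr_ge0.
Qed.

Lemma enorm_sub_e1 u (a : R) : enorm u - `|a| <= enorm (u - a *: e1 m).
Proof.
have [h|h] := lerP (enorm u) `|a|.
  by apply: (le_trans _ (enorm_ge0 _)); rewrite subr_le0.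
have h0 : 0 <= enorm u - `|a| by rewrite subr_ge0 ltW.
rewrite -(ger0_norm h0); apply: le_sqrt_of; first exact: edot_ge0.
rewrite edotBr edotZr [edot (_ - _) u]edotC [edot (_ - _) (e1 m)]edotC !edotBr !edotZr.
rewrite !(edotC (e1 m)) !edot_e1 !mxE /= mulr1 -enorm_sq.

have hu := coord_le u 0.
have : a * u 0 0 <= `|a| * enorm u.
  by rewrite (le_trans (ler_norm _))// normrM ler_wpM2l.
rewrite sqrrB real_normK ?num_real//.
move=> hh; nra.
Qed.

End Alg.
Section Inward.
Context {R : realType}.
Context {m : nat}.

Lemma inward (F p : 'rV[R]_m.+1) (u eps c7 : R) :
  0 < c7 -> 0 < eps -> `|u| <= eps ->
  0 < enorm (p - u *: e1 m) ->
  edot F ((enorm (p - u *: e1 m))^-1 *: (p - u *: e1 m)) < - c7 * enorm F ->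
  2 * (c7 + 1) * eps <= c7 * enorm p ->
  edot F ((enorm p)^-1 *: p) <= - (c7 / 2) * enorm F.
Proof.
set q := p - u *: e1 m => c70 eps0 ueps q0 hF hp.
have hpq : p = q + u *: e1 m by rewrite /q subrK.
have p0 : 0 < enorm p.
  have : 0 < c7 * enorm p by apply: (lt_le_trans _ hp); nra.
  by rewrite pmulr_rgt0.
have Fq : edot F q <= - c7 * enorm q * enorm F.
  have -> : edot F q = enorm q * edot F ((enorm q)^-1 *: q).
    by rewrite edotZr mulrA divff ?mul1r// gt_eqF.
  nra.
have F00 : u * F 0 0 <= eps * enorm F.
  apply: (le_trans (ler_norm _)); rewrite normrM.
  by apply: ler_pM => //; exact: coord_le.
have qp : enorm p - eps <= enorm q.
  by apply: (le_trans _ (enorm_sub_e1 p u)); lra.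
have Fp : edot F p <= - (c7 / 2) * enorm p * enorm F.
  rewrite {1}hpq edotDr edotZr edot_e1.
  have nF := enorm_ge0 F.
  have h1 : c7 * (enorm p - eps) * enorm F <= c7 * enorm q * enorm F.
    by apply: ler_wpM2r => //; apply: ler_wpM2l => //; exact: ltW.
  have h2 : (c7 + 1) * eps * enorm F <= c7 / 2 * enorm p * enorm F.
    by apply: ler_wpM2r => //; lra.
  nra.
rewrite edotZr; rewrite -(ler_pM2l p0) mulrA divff ?gt_eqF// mul1r.
by apply: (le_trans Fp); rewrite -mulrA mulrCA mulrA.
Qed.

End Inward.
Section Pointwise.
Context {R : realType} {m : nat}.

Lemma pointwise (A B x : 'rV[R]_m.+1) (w a b c : R) :
  0 <= w -> 0 <= a -> 0 <= b -> 0 < c ->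
  a * edot A x <= - c * (a * enorm A) ->
  b * edot B x <= - c * (b * enorm B) ->
  \sum_(i < m.+1) (w * (A 0 i * a + B 0 i * b)) * x 0 i <=
  - (c / m.+1%:R) * \sum_(i < m.+1) `|w * (A 0 i * a + B 0 i * b)|.
Proof.
move=> w0 a0 b0 c0 hA hB.
have -> : \sum_(i < m.+1) (w * (A 0 i * a + B 0 i * b)) * x 0 i =
    w * (a * edot A x) + w * (b * edot B x).
  rewrite /edot !mulr_sumr -big_split; apply: eq_bigr => i _ /=.
  ring.
have n0 : 0 < m.+1%:R :> R by [].
have hs : \sum_(i < m.+1) `|w * (A 0 i * a + B 0 i * b)| <=
    w * (a * (m.+1%:R * enorm A)) + w * (b * (m.+1%:R * enorm B)).
  apply: (le_trans (y := \sum_(i < m.+1) (w * (a * `|A 0 i|) + w * (b * `|B 0 i|)))).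
    apply: ler_sum => i _; rewrite normrM (ger0_norm w0) -mulrDr.
    apply: ler_wpM2l => //; apply: (le_trans (ler_normD _ _)).
    by rewrite !normrM (ger0_norm a0) (ger0_norm b0) [_ * a]mulrC [_ * b]mulrC.
  rewrite big_split /= -!mulr_sumr.
  apply: lerD; apply: ler_wpM2l => //; apply: ler_wpM2l => //; exact: sum_le_n.
have e : c / m.+1%:R * (w * (a * (m.+1%:R * enorm A)) + w * (b * (m.+1%:R * enorm B)))
   = c * w * (a * enorm A) + c * w * (b * enorm B).
  by field; rewrite gt_eqF.
have cn : 0 <= c / m.+1%:R by rewrite divr_ge0// ltW.
have := ler_wpM2l cn hs; rewrite e => h.
have h1 : w * (a * edot A x) <= - c * w * (a * enorm A).
  have := ler_wpM2l w0 hA; nra.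
have h2 : w * (b * edot B x) <= - c * w * (b * enorm B).
  have := ler_wpM2l w0 hB; nra.
rewrite mulNr; set S := c / m.+1%:R * _ in h *; lra.
Qed.

End Pointwise.
Section Integ.
Context {R : realType}.
Local Notation mu := (@lebesgue_measure R).

Lemma int_sum (D : set R) (mD : measurable D) (I : Type) (s : seq I)
    (g : I -> R -> R) :
  (forall i, mu.-integrable D (EFin \o g i)) ->
  mu.-integrable D (EFin \o (fun x => \sum_(i <- s) g i x)).
Proof.
move=> h.
have := (@integrable_sum _ _ _ mu D mD I s xpredT (fun i x => (g i x)%:E) (fun i _ => h i)).
apply: eq_integrable => //.
by move=> x _; rewrite /= sumEFin.
Qed.

Lemma Rint_sum (D : set R) (mD : measurable D) (I : Type) (s : seq I)
    (g : I -> R -> R) :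
  (forall i, mu.-integrable D (EFin \o g i)) ->
  Rintegral mu D (fun x => \sum_(i <- s) g i x) = \sum_(i <- s) Rintegral mu D (g i).
Proof.
move=> h; elim: s => [|i s IH].
  rewrite big_nil; under eq_Rintegral do rewrite big_nil.
  by rewrite Rintegral_cst// mul0r.
rewrite big_cons; under eq_Rintegral do rewrite big_cons.
by rewrite RintegralD// ?IH//; exact: int_sum.
Qed.

Lemma int_cont (a b : R) (g : R -> R) : continuous g ->
  mu.-integrable `[a, b] (EFin \o g).
Proof.
move=> hg; apply: continuous_compact_integrable; first exact: segment_compact.
exact: continuous_subspaceT.
Qed.

Lemma meas_ind {D : set (measurableTypeR R)} (mD : measurable D) (c : R) (b : bool) :
  measurable_fun D (fun u : measurableTypeR R => if (if b then c <= u else u <= c) then 1 else 0 : R).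
Proof.
apply: measurable_fun_if => //.
case: b; apply: measurable_realfun.measurable_fun_ler => //.
Qed.

Lemma int_ind_cont (a b0 c : R) (b : bool) (g : R -> R) : continuous g ->
  mu.-integrable `[a, b0]
    (EFin \o (fun u => g u * (if (if b then c <= u else u <= c) then 1 else 0))).
Proof.
move=> hg.
have mD : measurable (`[a, b0]%classic : set (measurableTypeR R)) by exact: measurable_itv.
have h := integrableMr mD (meas_ind mD c b) _ (int_cont a b0 g hg).
have hb : [bounded (if (if b then c <= x else x <= c) then 1 else 0 : R) | x in `[a, b0]%classic].
  exists 1; split; first by rewrite num_real.
  move=> M M1 x _; apply: (le_trans _ (ltW M1)).
  by case: ifP; rewrite ?normr1 ?normr0.
move: (h hb); apply: eq_integrable => //.
by move=> x _; rewrite /= -EFinM mulrC.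
Qed.

End Integ.
Section Pos.
Context {R : realType}.
Local Notation mu := (@lebesgue_measure R).

Lemma Rint_pos (D : set (measurableTypeR R)) (mD : measurable D) (u1 rho : R) (g H : R -> R) :
  0 < rho -> mu.-integrable D (EFin \o g) -> (forall u, D u -> 0 <= g u) ->
  {for u1, continuous H} -> 0 < H u1 ->
  (forall u, `|u1 - u| < rho -> D u /\ H u <= g u) ->
  0 < Rintegral mu D g.
Proof.
move=> rho0 ig g0 cH H0 hr.
have H20 : 0 < H u1 / 2 by rewrite divr_gt0.
have := @cvgr_dist_lt _ _ _ (nbhs u1) _ H (H u1) cH _ H20.
move=> /(_ (nbhs_filter _))  /nbhs_ballP[del /= del0 hdel].
set d := Num.min del rho / 2.
have d0 : 0 < d by rewrite divr_gt0// lt_min del0 rho0.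
have dlt : d < Num.min del rho by rewrite /d ltr_pdivrMr// ltr_pMr// ?ltr1n// lt_min del0 rho0.
have inJ u : `[u1 - d, u1 + d]%classic u -> `|u1 - u| < Num.min del rho.
  rewrite /= in_itv /= => /andP[h1 h2]; apply: le_lt_trans dlt.
  by rewrite ler_norml; apply/andP; split; lra.
have JD : (`[u1 - d, u1 + d]%classic : set (measurableTypeR R)) `<=` D.
  by move=> u /inJ; rewrite lt_min => /andP[_ /hr[]].
have gJ u : `[u1 - d, u1 + d]%classic u -> H u1 / 2 <= g u.
  move=> /inJ; rewrite lt_min => /andP[h1 h2].
  have [_ Hg] := hr u h2.
  have := hdel u; rewrite /ball /= => /(_ h1) h3.
  apply: le_trans Hg; move: h3; rewrite ltr_norml => /andP[_]; lra.
have mJ : measurable (`[u1 - d, u1 + d]%classic : set (measurableTypeR R)) by exact: measurable_itv.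
have mg := measurable_int _ ig.
have fin := integrable_fin_num mD ig.
rewrite /Rintegral; apply: fine_gt0; apply/andP; split; last first.
  by rewrite ltey_eq fin.
apply: (lt_le_trans _ (ge0_subset_integral mu mJ mD mg _ JD)); last first.
  by move=> x /g0; rewrite lee_fin.
apply: (lt_le_trans _ (ge0_le_integral mu mJ (f1 := cst (H u1 / 2)%:E) (f2 := EFin \o g) _ _ _ _)); last first.
- by move=> x /gJ; rewrite lee_fin.
- exact: measurable_funS mg.
- by [].
- by move=> x _; rewrite lee_fin ltW.
rewrite integral_cst//.
have E := lebesgue_measure_itv `[u1 - d, u1 + d].
move: E; rewrite /= lte_fin ltrD2l.
have -> : (- d < d) = true by apply/idP; lra.
rewrite -EFinB => E.
apply: (@lt_le_trans _ _ ((H u1 / 2)%:E * (2 * d)%:E)%E).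
  by rewrite -EFinM lte_fin mulr_gt0//; lra.
rewrite le_eqVlt; apply/orP; left; apply/eqP; congr (_ * _)%E.
rewrite (_ : 2 * d = u1 + d - (u1 - d)); last by lra.
exact: (esym E).
Qed.
End Pos.
Section Cont.
Context {R : realType} {m : nat}.
Local Notation mu := (@lebesgue_measure R).

Lemma int_scale {D : set (measurableTypeR R)} (mD : measurable D) {f : R -> R} (k : R) :
  mu.-integrable D (EFin \o f) -> mu.-integrable D (EFin \o (fun u => f u * k)).
Proof.
move=> h; have := integrableZr mD k h; apply: eq_integrable => //.
Qed.

Lemma int_scalel {D : set (measurableTypeR R)} (mD : measurable D) {f : R -> R} (k : R) :
  mu.-integrable D (EFin \o f) -> mu.-integrable D (EFin \o (fun u => k * f u)).
Proof.
move=> h; have := int_scale mD k h; apply: eq_integrable => //.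
by move=> x _; rewrite /= mulrC.
Qed.

Lemma cont_q (p : 'rV[R]_m.+1) : continuous (fun u : R => p - u *: e1 m).
Proof.
move=> u; apply: (@continuousB _ _ _ (cst p) (fun u : R => u *: e1 m));
  first [exact: cst_continuous | by apply: continuousZr_tmp].
Qed.

Lemma cont_coord (G : 'rV[R]_m.+1 -> 'rV[R]_m.+1) (p : 'rV[R]_m.+1) i :
  continuous G -> continuous (fun u : R => G (p - u *: e1 m) 0 i).
Proof.
move=> hG u.
apply: (@continuous_comp _ _ _ (fun u : R => G (p - u *: e1 m)) (fun M : 'rV[R]_m.+1 => M 0 i)).
  apply: (@continuous_comp _ _ _ (fun u : R => p - u *: e1 m) G).
    exact: cont_q.
  exact: hG.
exact: coord_continuous.
Qed.

Lemma cont_sum (I : Type) (s : seq I) (h : I -> R -> R) (x : R) :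
  (forall i, {for x, continuous (h i)}) ->
  {for x, continuous (fun u => \sum_(j <- s) h j u)}.
Proof.
move=> hc; elim: s => [|j s IH].
  have -> : (fun u => \sum_(j <- [::]) h j u) = cst 0.
    by apply: funext => u; rewrite big_nil.
  exact: cst_continuous.
have -> : (fun u => \sum_(j0 <- j :: s) h j0 u) = (fun u => h j u + \sum_(j <- s) h j u).
  by apply: funext => u; rewrite big_cons.
exact: (@continuousD _ _ _ (h j) (fun u => \sum_(j <- s) h j u)).
Qed.

End Cont.
Section Misc.
Context {R : realType} {m : nat}.

Lemma cont_pos (w : R -> R) (u0 : R) : {for u0, continuous w} -> 0 < w u0 ->
  exists2 r : R, 0 < r & forall u, `|u0 - u| < r -> 0 < w u.
Proof.
move=> cw w0.
have := @cvgr_dist_lt _ _ _ (nbhs u0) _ w (w u0) cw _ w0.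
move=> /(_ (nbhs_filter _)) /nbhs_ballP[r /= r0 hr].
exists r => // u ur; have := hr u; rewrite /ball /= => /(_ ur).
by rewrite ltr_norml => /andP[_]; lra.
Qed.

Lemma pick_pt (u0 eps r c : R) : `|u0| <= eps -> 0 < eps -> 0 < r ->
  exists u1, [/\ `|u1| < eps, `|u0 - u1| < r & u1 != c].
Proof.
move=> hu e0 r0.
have mr : Num.min r eps <= r by rewrite ge_min lexx.
have me : Num.min r eps <= eps by rewrite ge_min lexx orbT.
have mp : 0 < Num.min r eps by rewrite lt_min r0 e0.
set mn := Num.min r eps in mr me mp.
set s := mn / 2.
have s0 : 0 < s by rewrite /s; lra.
have sr : s < r by rewrite /s; lra.
have se : s <= eps / 2 by rewrite /s; lra.
move: hu; rewrite ler_norml => /andP[h1 h2].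
have [u0p|u0n] := lerP 0 u0.
  have [hc|hc] := eqVneq (u0 - s) c.
    exists (u0 - s / 2); split.
    - by rewrite ltr_norml; apply/andP; split; lra.
    - by rewrite ger0_norm; lra.
    - by apply/eqP => h; rewrite -h in hc; move: hc => /eqP; apply/negP; apply/eqP; lra.
  exists (u0 - s); split => //.
  - by rewrite ltr_norml; apply/andP; split; lra.
  - by rewrite ger0_norm; lra.
have [hc|hc] := eqVneq (u0 + s) c.
  exists (u0 + s / 2); split.
  - by rewrite ltr_norml; apply/andP; split; lra.
  - by rewrite ltr0_norm; lra.
  - by apply/eqP => h; rewrite -h in hc; move: hc => /eqP; apply/negP; apply/eqP; lra.
exists (u0 + s); split => //.
- by rewrite ltr_norml; apply/andP; split; lra.
- by rewrite ltr0_norm; lra.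
Qed.

Lemma sum_abs_gt0 (v : 'rV[R]_m.+1) : v != 0 -> 0 < \sum_(i < m.+1) `|v 0 i|.
Proof.
move=> v0.
case: (pselect (exists i, v 0 i != 0)) => [[i vi]|h].
  rewrite (bigD1 i)//=; apply: (lt_le_trans (y := `|v 0 i|)); first by rewrite normr_gt0.
  by rewrite lerDl; apply: sumr_ge0.
exfalso; move/negP: v0; apply; apply/eqP/rowP => j; rewrite mxE.
by apply/eqP; apply: contra_notT h => hj; exists j.
Qed.

End Misc.
Theorem lemma3p2 (R : realType) (m : nat)
  (Fm Fp : 'rV[R]_m.+1 -> 'rV[R]_m.+1) (zeta : R -> R)
  (* F^- and F^+ smooth *)
  (hFm : smooth Fm) (hFp : smooth Fp)
  (* mollifier: smooth, even, nonnegative, supported in [-1,1], integral 1 *)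
  (hz_smooth : smooth (zeta : R^o -> R^o))
  (hz_even : forall u, zeta (- u) = zeta u)
  (hz_nonneg : forall u, 0 <= zeta u)
  (hz_supp : forall u, 1 < `|u| -> zeta u = 0)
  (hz_int : (\int[lebesgue_measure]_(u in [set: R]) (zeta u)%:E = 1)%E)
  (* (A1) growth *)
  (pp R1 c1 c2 c3 c4 c5 c6 : R)
  (hpp : 1 < pp) (hR1 : 0 < R1) (hc1 : 0 < c1) (hc3 : 0 < c3) (hc5 : 0 < c5)
  (hc51 : c5 < c1)
  (hA1m : forall p : 'rV[R]_m.+1, R1 < enorm p -> p 0 0 < 0 ->
     c1 * enorm p `^ pp + c2 <= enorm (Fm p))
  (hA1p : forall p : 'rV[R]_m.+1, R1 < enorm p -> 0 < p 0 0 ->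
     c1 * enorm p `^ pp + c2 <= enorm (Fp p))
  (hA1dm : forall p : 'rV[R]_m.+1, R1 < enorm p -> p 0 0 < 0 ->
     enorm ('D_(e1 m) Fm p) <= c3 * enorm p `^ pp + c4)
  (hA1dp : forall p : 'rV[R]_m.+1, R1 < enorm p -> 0 < p 0 0 ->
     enorm ('D_(e1 m) Fp p) <= c3 * enorm p `^ pp + c4)
  (hA1jump : forall p : 'rV[R]_m.+1, R1 < enorm p -> p 0 0 = 0 ->
     enorm (Fp p - Fm p) <= c5 * enorm p `^ pp + c6)
  (* (A2) asymptotically inward-flowing *)
  (R2 c7 : R) (hR2 : 0 < R2) (hc7 : 0 < c7)
  (hA2nz : forall p : 'rV[R]_m.+1, R2 < enorm p -> Fm p != 0 /\ Fp p != 0)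
  (hA2m : forall p : 'rV[R]_m.+1, R2 < enorm p -> p 0 0 <= 0 ->
     edot (Fm p) ((enorm p)^-1 *: p) < - c7 * enorm (Fm p))
  (hA2p : forall p : 'rV[R]_m.+1, R2 < enorm p -> 0 <= p 0 0 ->
     edot (Fp p) ((enorm p)^-1 *: p) < - c7 * enorm (Fp p)) :
  forall eps : R, 0 < eps ->
    exists R2e c7e : R, 0 < R2e /\ 0 < c7e /\
      forall p : 'rV[R]_m.+1, R2e < enorm p ->
        Feps zeta Fm Fp eps p != 0 /\
        edot (Feps zeta Fm Fp eps p) ((enorm p)^-1 *: p)
          < - c7e * enorm (Feps zeta Fm Fp eps p).
Proof.
move=> eps eps0.
set c := c7 / 2.
have c0 : 0 < c by rewrite /c divr_gt0.
set K := Num.max (R2 + eps) (2 * (c7 + 1) * eps / c7).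
have KR : R2 + eps <= K by rewrite /K le_max lexx.
have Kc : 2 * (c7 + 1) * eps / c7 <= K by rewrite /K le_max lexx orbT.
have n0 : 0 < m.+1%:R :> R by [].
have k0 : 0 < c / m.+1%:R by rewrite divr_gt0.
exists K, (c / m.+1%:R / 2); split; [lra|split; [by rewrite divr_gt0|]].
move=> p hp.
have hpR : R2 + eps < enorm p by lra.
have hpc : 2 * (c7 + 1) * eps <= c7 * enorm p.
  have : 2 * (c7 + 1) * eps / c7 < enorm p by lra.
  move=> h; rewrite ltr_pdivrMr// in h; nra.
pose D := (`[- eps, eps]%classic : set (measurableTypeR R)).
have mD : measurable D by exact: measurable_itv.
have inD u : D u <-> `|u| <= eps.
  by rewrite /D /= in_itv /= ler_norml.
have qnorm u : `|u| <= eps -> R2 < enorm (p - u *: e1 m).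
  by move=> hu; have := enorm_sub_e1 p u; lra.
have q00 u : (p - u *: e1 m) 0 0 = p 0 0 - u by rewrite !mxE /= mulr1.
pose xh := (enorm p)^-1 *: p.
pose w u := zeta_eps zeta eps u.
have w0 u : 0 <= w u by rewrite /w /zeta_eps divr_ge0// ltW.
pose A u : R := if p 0 0 <= u then 1 else 0.
pose B u : R := if u <= p 0 0 then 1 else 0.
pose f (i : 'I_m.+1) u := w u * (Fm (p - u *: e1 m) 0 i * A u + Fp (p - u *: e1 m) 0 i * B u).
have Fi i : Feps zeta Fm Fp eps p 0 i = Rintegral lebesgue_measure D (f i).
  by rewrite mxE.
have hFmc : continuous Fm := (hFm [::]).1.
have hFpc : continuous Fp := (hFp [::]).1.
have hzc : continuous zeta := (hz_smooth [::]).1.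
have hwc : continuous w.
  move=> u; rewrite /w /zeta_eps.
  apply: (@continuousM _ _ (fun u : R => zeta (u / eps)) (fun=> eps^-1)); last first.
    exact: cst_continuous.
  apply: (@continuous_comp _ _ _ (fun u : R => u / eps) zeta); last exact: hzc.
  apply: (@continuousM _ _ id (fun=> eps^-1)); last exact: cst_continuous.
  by [].
have gc (G : 'rV[R]_m.+1 -> 'rV[R]_m.+1) i : continuous G ->
    continuous (fun u => w u * G (p - u *: e1 m) 0 i).
  move=> hG u; apply: (@continuousM _ _ w (fun u => G (p - u *: e1 m) 0 i)).
    exact: hwc.
  exact: cont_coord.
have int_f i : lebesgue_measure.-integrable D (EFin \o f i).
  have h1 := int_ind_cont (- eps) eps (p 0 0) true _ (gc Fm i hFmc).
  have h2 := int_ind_cont (- eps) eps (p 0 0) false _ (gc Fp i hFpc).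
  have := integrableD mD h1 h2; apply: eq_integrable => // u _.
  by rewrite /= -EFinD /f /A /B; congr EFin; rewrite mulrDr !mulrA.
have int_fx i : lebesgue_measure.-integrable D (EFin \o (fun u => f i u * xh 0 i)).
  exact: (int_scale mD (xh 0 i) (int_f i)).
have int_fa i : lebesgue_measure.-integrable D (EFin \o (fun u => `|f i u|)).
  exact: integrable_norm (int_f i).
have int_S : lebesgue_measure.-integrable D
    (EFin \o (fun u => \sum_(i < m.+1) `|f i u|)).
  exact: (int_sum _ mD _ _ _ int_fa).
set I := Rintegral lebesgue_measure D (fun u => \sum_(i < m.+1) `|f i u|).
have hE : edot (Feps zeta Fm Fp eps p) xh =
    Rintegral lebesgue_measure D (fun u => \sum_(i < m.+1) f i u * xh 0 i).
  rewrite Rint_sum//; apply: eq_bigr => i _.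
  by rewrite Fi RintegralZr.
have hN : enorm (Feps zeta Fm Fp eps p) <= I.
  apply: (le_trans (enorm_le_sum _)).
  rewrite /I Rint_sum//; apply: ler_sum => i _.
  rewrite Fi; exact: le_normr_Rintegral mD (int_f i).
have hI1 : edot (Feps zeta Fm Fp eps p) xh <= - (c / m.+1%:R) * I.
  rewrite hE /I -RintegralZl//.
  apply: le_Rintegral => //.
  - exact: (int_sum _ mD _ _ _ int_fx).
  - exact: (int_scalel mD _ int_S).
  move=> u /inD hu.
  have q0 : 0 < enorm (p - u *: e1 m) by apply: lt_trans (qnorm u hu).
  apply: pointwise => //.
  - by rewrite /A; case: ifP.
  - by rewrite /B; case: ifP.
  - rewrite /A; case: ifP => h; last by rewrite !mul0r mulr0.
    rewrite !mul1r; apply: (@inward _ _ _ _ u eps c7) => //.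
    by apply: hA2m; [exact: qnorm | rewrite q00 subr_le0].
  - rewrite /B; case: ifP => h; last by rewrite !mul0r mulr0.
    rewrite !mul1r; apply: (@inward _ _ _ _ u eps c7) => //.
    by apply: hA2p; [exact: qnorm | rewrite q00 subr_ge0].
have hI : 0 < I.
  have [t0 zt0] : exists t0, zeta t0 != 0.
    case: (pselect (exists t0, zeta t0 != 0)) => // h.
    have z0 t : zeta t = 0.
      by apply/eqP; apply: contra_notT h => ht; exists t.
    have : (\int[lebesgue_measure]_(u in [set: R]) (zeta u)%:E = 0)%E.
      by rewrite (eq_integral (fun=> 0%E)) ?integral0// => x _; rewrite z0.
    by rewrite hz_int => -[] /eqP; rewrite oner_eq0.
  have zp : 0 < zeta t0 by rewrite lt_def zt0 hz_nonneg.
  have t01 : `|t0| <= 1.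
    by rewrite leNgt; apply/negP => h; move: zt0; rewrite hz_supp// eqxx.
  set u0 := eps * t0.
  have hu0 : `|u0| <= eps.
    by rewrite /u0 normrM (ger0_norm (ltW eps0)) ler_piMr// ltW.
  have wu0 : 0 < w u0.
    rewrite /w /zeta_eps /u0 (_ : eps * t0 / eps = t0); first by rewrite divr_gt0.
    by rewrite [eps * t0]mulrC mulfK// gt_eqF.
  have [r r0 hr] := cont_pos w u0 (hwc u0) wu0.
  have [u1 [u1e u1r u1c]] := pick_pt u0 eps r (p 0 0) hu0 eps0 r0.
  have wu1 := hr u1 u1r.
  have u1e' : `|u1| <= eps by apply: ltW.
  have cabs (G : 'rV[R]_m.+1 -> 'rV[R]_m.+1) : continuous G ->
      {for u1, continuous (fun u => w u * \sum_(i < m.+1) `|G (p - u *: e1 m) 0 i|)}.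
    move=> hG.
    apply: (@continuousM _ _ w (fun u => \sum_(i < m.+1) `|G (p - u *: e1 m) 0 i|)).
      exact: hwc.
    apply: cont_sum => i.
    have h1 := cont_coord G p i hG u1.
    have h2 := @norm_continuous _ R^o (G (p - u1 *: e1 m) 0 i).
    exact: (continuous_comp h1 h2).
  move: u1c; rewrite neq_lt => /orP[hlt|hlt].
  - apply: (@Rint_pos _ D mD u1 (Num.min (p 0 0 - u1) (eps - `|u1|)) _
      (fun u => w u * \sum_(i < m.+1) `|Fp (p - u *: e1 m) 0 i|)) => //.
    + by rewrite lt_min !subr_gt0 hlt u1e.
    + by move=> u _; apply: sumr_ge0.
    + exact: cabs.
    + apply: mulr_gt0 => //; apply: sum_abs_gt0.
      exact: (hA2nz _ (qnorm u1 u1e')).2.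
    move=> u; rewrite lt_min => /andP[h1 h2].
    have hu : `|u| <= eps.
      have h3 : `|u| <= `|u1| + `|u1 - u|.
        by have := ler_normD u1 (u - u1); rewrite addrC subrK distrC.
      lra.
    split; first exact/inD.
    have hup : u < p 0 0 by move: h1; rewrite ltr_norml => /andP[? ?]; lra.
    rewrite mulr_sumr; apply: ler_sum => i _.
    rewrite /f /A /B [p 0 0 <= u]leNgt hup /= (ltW hup) mulr0 add0r mulr1 normrM (ger0_norm (w0 u)).
    by [].
  - apply: (@Rint_pos _ D mD u1 (Num.min (u1 - p 0 0) (eps - `|u1|)) _
      (fun u => w u * \sum_(i < m.+1) `|Fm (p - u *: e1 m) 0 i|)) => //.
    + by rewrite lt_min !subr_gt0 hlt u1e.
    + by move=> u _; apply: sumr_ge0.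
    + exact: cabs.
    + apply: mulr_gt0 => //; apply: sum_abs_gt0.
      exact: (hA2nz _ (qnorm u1 u1e')).1.
    move=> u; rewrite lt_min => /andP[h1 h2].
    have hu : `|u| <= eps.
      have h3 : `|u| <= `|u1| + `|u1 - u|.
        by have := ler_normD u1 (u - u1); rewrite addrC subrK distrC.
      lra.
    split; first exact/inD.
    have hup : p 0 0 < u by move: h1; rewrite ltr_norml => /andP[? ?]; lra.
    rewrite mulr_sumr; apply: ler_sum => i _.
    rewrite /f /A /B [u <= p 0 0]leNgt hup /= (ltW hup) mulr0 addr0 mulr1 normrM (ger0_norm (w0 u)).
    by [].
set k := c / m.+1%:R in k0 hI1 *.
split.
  apply/eqP => F0; move: hI1; rewrite F0.
  have -> : edot 0 xh = 0 by rewrite /edot big1// => i _; rewrite mxE mul0r.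
  move=> h; have : 0 < k * I by rewrite mulr_gt0.
  lra.
have e0 := enorm_ge0 (Feps zeta Fm Fp eps p).
rewrite -/xh.
nra.
Qed.
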